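(* Impose (A1)–(A6) and (A8') and fix $x\in\mathcal X$, $u\in[0,1]$. Then $\underline\Lambda(x,u)\le\Delta^{OO}_{Y^*}(x,u)\le\overline\Lambda(x,u)$, where (all functions at $(x,u)$): (i) under (A7.1): $\underline\Lambda=\frac{m_1^Y}{m_1^S}-\frac{m_0^Y-\underline y^*(-\Delta_S)}{m_1^S}$ and $\overline\Lambda=\frac{m_1^Y}{m_1^S}-\underline y^*$; (ii) under (A7.2): $\underline\Lambda=\frac{m_1^Y}{m_1^S}-\overline y^*$ and $\overline\Lambda=\frac{m_1^Y}{m_1^S}-\frac{m_0^Y-\overline y^*(-\Delta_S)}{m_1^S}$; (iii) under (A7.3) (sub-case (a) or (b)): $\underline\Lambda=\frac{m_1^Y}{m_1^S}-\min\left\{\frac{m_0^Y-\underline y^*(-\Delta_S)}{m_1^S},\overline y^*\right\}$ and $\overline\Lambda=\frac{m_1^Y}{m_1^S}-\max\left\{\frac{m_0^Y-\overline y^*(-\Delta_S)}{m_1^S},\underline y^*\right\}$.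
   Context: Standing setup. On a common probability space: $X$ (covariates, support $\mathcal X$), $Z$ (instrument, support $\mathcal Z$), $W=(X,Z)$; latent real random variables $U,V$, jointly continuously distributed conditional on $X$, with $U\mid X$ and $V\mid X$ each Uniform$[0,1]$ (their joint dependence unrestricted); real potential outcomes of interest $Y_0^*,Y_1^*$. Given functions $P:\mathcal X\times\mathcal Z\to[0,1]$ and $Q:\{0,1\}\times\mathcal X\to[0,1]$, define the treatment $D=\mathbf 1\{P(W)\ge U\}$, potential selection indicators $S_d=\mathbf 1\{Q(d,X)\ge V\}$ ($d\in\{0,1\}$), selection indicator $S=DS_1+(1-D)S_0$, potential observable outcomes $Y_d=S_dY_d^*$ and observable outcome $Y=DY_1+(1-D)Y_0$. For $x\in\mathcal X$, $u\in[0,1]$, $d\in\{0,1\}$: $m_d^Y(x,u)=\mathbb E[Y_d\mid X=x,U=u]$, $m_d^S(x,u)=\mathbb E[S_d\mid X=x,U=u]$, $\Delta_S(x,u)=m_1^S(x,u)-m_0^S(x,u)$, and $\Delta^{OO}_{Y^*}(x,u)=\mathbb E[Y_1^*-Y_0^*\mid X=x,U=u,S_0=1,S_1=1]$. Ratios appearing are assumed well defined (nonzero denominators). Assumptions: (A1) $Z$ is independent of $(U,V,Y_0^*,Y_1^* )$ conditional on $X$; (A2) the distribution of $P(W)$ given $X$ is nondegenerate; (A3) $\mathbb E|Y_d^*|<\infty$ and $\mathbb E[(Y_d^* )^2]<\infty$; (A4) $0<\mathbb P[D=1\mid X]<1$; (A5) $X$ is invariant to counterfactual manipulation of treatment; (A6)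 $Y_0^*,Y_1^*$ have a common support $\mathcal Y^*\subseteq\mathbb R$; $\underline y^*=\inf\mathcal Y^*$, $\overline y^*=\sup\mathcal Y^*$ (possibly infinite), known. Support cases: (A7.1) $\underline y^*>-\infty$, $\overline y^*=+\infty$, $\mathcal Y^*$ an interval; (A7.2) $\underline y^*=-\infty$, $\overline y^*<\infty$, $\mathcal Y^*$ an interval; (A7.3) both finite and either (a) $\mathcal Y^*$ an interval or (b) $\underline y^*,\overline y^*\in\mathcal Y^*$. (A8') (negative effect on selection) $Q(0,x)>Q(1,x)>0$ for all $x\in\mathcal X$. *)

(* Defs.v *)
From HB Require Import structures.
From mathcomp Require Import all_boot all_order all_algebra.
From mathcomp Require Import all_classical all_reals all_analysis.
From mathcomp Require Import measurable_realfun.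
Set Implicit Arguments. Unset Strict Implicit. Unset Printing Implicit Defensive.
Import Order.TTheory GRing.Theory Num.Theory.
Local Open Scope classical_set_scope.
Local Open Scope ring_scope.

Section Defs.
Context {R : realType} {dO dX : measure_display}
  {Omega : measurableType dO} {TX : measurableType dX}.

(* [k] is a regular conditional probability of [P] given [(X, U)]:
   k x u is (a version of) the conditional law of the sample point given
   X = x, U = u. *)
Definition is_cond_law (P : probability Omega R) (X : Omega -> TX)
    (U : Omega -> R) (k : TX -> R -> probability Omega R) : Prop :=
  (forall A : set Omega, measurable A ->
     measurable_fun [set: TX * R]
       ((fun xu : TX * R => k xu.1 xu.2 A) : TX * R -> \bar R)) /\
  (forall (A : set Omega) (B : set (TX * R)), measurable A -> measurable B ->
     P (A `&` ((fun w => (X w, U w)) @^-1` B)) =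
     (\int[P]_(w in (fun w => (X w, U w)) @^-1` B) k (X w) (U w) A)%E).

Definition Ex (mu : probability Omega R) (f : Omega -> R) : R :=
  fine (\int[mu]_w (f w)%:E).

(* indicator of the event {Q(d,x) >= V} : the potential selection S_d *)
Definition Sel (Q : bool -> TX -> R) (V : Omega -> R) (d : bool) (x : TX)
  : Omega -> R := fun w => ((V w <= Q d x)%R)%:R.

Definition Ystar (Y0s Y1s : Omega -> R) (d : bool) : Omega -> R :=
  if d then Y1s else Y0s.

Definition mY (k : TX -> R -> probability Omega R) Q V Y0s Y1s d x (u : R) : R :=
  Ex (k x u) (fun w => Sel Q V d x w * Ystar Y0s Y1s d w).

Definition mS (k : TX -> R -> probability Omega R) Q V d x (u : R) : R :=
  Ex (k x u) (Sel Q V d x).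

Definition DeltaS k Q V x (u : R) : R := mS k Q V true x u - mS k Q V false x u.

(* Delta^OO_{Y*}(x,u) = E[Y1* - Y0* | X = x, U = u, S0 = 1, S1 = 1] *)
Definition DeltaOO k Q V (Y0s Y1s : Omega -> R) x (u : R) : R :=
  Ex (k x u) (fun w => Sel Q V false x w * Sel Q V true x w * (Y1s w - Y0s w))
  / Ex (k x u) (fun w => Sel Q V false x w * Sel Q V true x w).

End Defs.

(* Main.v *)
Require Import Defs.
From HB Require Import structures.
From mathcomp Require Import all_boot all_order all_algebra.
From mathcomp Require Import all_classical all_reals all_analysis.
From mathcomp Require Import measurable_realfun.
From mathcomp Require Import ring.
Import Order.TTheory GRing.Theory Num.Theory.
Local Open Scope classical_set_scope.
Local Open Scope ring_scope.

Section Aux.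
Context {R : realType} {d : measure_display} {T : measurableType d}.
Variable mu : probability T R.

Lemma sel_bounded (V : T -> R) c : [bounded (((V w <= c)%R)%:R : R) | w in [set: T]].
Proof.
exists 1; split => // M M1 y _ /=.
case: (V y <= c) => /=; rewrite ?normr0 ?normr1; apply/ltW => //.
by apply: lt_trans M1.
Qed.

Lemma sel_meas (V : T -> R) c : measurable_fun [set: T] V ->
  measurable_fun [set: T] (fun w => (((V w <= c)%R)%:R : R)).
Proof.
move=> mV.
have -> : (fun w => (((V w <= c)%R)%:R : R)) = \1_(V @^-1` `]-oo, c]).
  apply/funext => w; rewrite indicE; congr (_%:R); congr nat_of_bool.
  by apply/idP/idP => [h|/set_mem]; [apply/mem_set; rewrite /= in_itv /= h | rewrite /= in_itv].
apply: measurable_indic.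
by rewrite -[X in measurable X]setTI; apply: mV => //; exact: measurable_itv.
Qed.

Definition bm (s : T -> R) := measurable_fun [set: T] s /\ [bounded s w | w in [set: T]].

Lemma int_bm {s} : bm s -> mu.-integrable [set: T] (EFin \o s).
Proof.
move=> [ms bs]; apply: measurable_bounded_integrable => //.
by apply: (le_lt_trans (probability_le1 _ measurableT)); rewrite ltry.
Qed.

Lemma int_mul {s y} : bm s -> mu.-integrable [set: T] (EFin \o y) ->
  mu.-integrable [set: T] (EFin \o (fun w => s w * y w)).
Proof.
move=> [ms bs] iy; have := integrableMr measurableT ms bs iy.
apply: eq_integrable => // w _ /=; by rewrite EFinM.
Qed.

Local Notation I f := (\int[mu]_w f w).

Lemma keyA s0 s1 y a : bm s0 -> bm s1 -> mu.-integrable [set: T] (EFin \o y) ->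
  (forall w, s1 w <= s0 w) -> (forall w, a <= y w) ->
  I (fun w => s1 w * y w) <= I (fun w => s0 w * y w) - a * (I s0 - I s1).
Proof.
move=> b0 b1 iy h01 hy.
have i0 := int_bm b0; have i1 := int_bm b1.
have i0y := int_mul b0 iy; have i1y := int_mul b1 iy.
have iB : mu.-integrable [set: T] (EFin \o (fun w => s0 w - s1 w)).
  by apply: (eq_integrable measurableT _ _ _ (integrableB measurableT i0 i1)) => w _; rewrite /= EFinB.
have iZ : mu.-integrable [set: T] (EFin \o (fun w => a * (s0 w - s1 w))).
  by apply: (eq_integrable measurableT _ _ _ (integrableZl measurableT a iB)) => w _; rewrite /= EFinM.
rewrite -RintegralB // -RintegralZl // -RintegralB //.
apply: le_Rintegral => //.
  by apply: (eq_integrable measurableT _ _ _ (integrableB measurableT i0y iZ)) => w _; rewrite /= EFinB.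
move=> w _; rewrite -subr_ge0.
have -> : s0 w * y w - a * (s0 w - s1 w) - s1 w * y w = (s0 w - s1 w) * (y w - a) by ring.
by apply: mulr_ge0; rewrite subr_ge0.
Qed.

Lemma keyA' s0 s1 y b : bm s0 -> bm s1 -> mu.-integrable [set: T] (EFin \o y) ->
  (forall w, s1 w <= s0 w) -> (forall w, y w <= b) ->
  I (fun w => s0 w * y w) - b * (I s0 - I s1) <= I (fun w => s1 w * y w).
Proof.
move=> b0 b1 iy h01 hy.
have i0 := int_bm b0; have i1 := int_bm b1.
have i0y := int_mul b0 iy; have i1y := int_mul b1 iy.
have iB : mu.-integrable [set: T] (EFin \o (fun w => s0 w - s1 w)).
  by apply: (eq_integrable measurableT _ _ _ (integrableB measurableT i0 i1)) => w _; rewrite /= EFinB.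
have iZ : mu.-integrable [set: T] (EFin \o (fun w => b * (s0 w - s1 w))).
  by apply: (eq_integrable measurableT _ _ _ (integrableZl measurableT b iB)) => w _; rewrite /= EFinM.
rewrite -RintegralB // -RintegralZl // -RintegralB //.
apply: le_Rintegral => //.
  by apply: (eq_integrable measurableT _ _ _ (integrableB measurableT i0y iZ)) => w _; rewrite /= EFinB.
move=> w _; rewrite -subr_ge0.
have -> : s1 w * y w - (s0 w * y w - b * (s0 w - s1 w)) = (s0 w - s1 w) * (b - y w) by ring.
by apply: mulr_ge0; rewrite subr_ge0.
Qed.

Lemma keyB s1 y a : bm s1 -> mu.-integrable [set: T] (EFin \o y) ->
  (forall w, 0 <= s1 w) -> (forall w, a <= y w) ->
  a * I s1 <= I (fun w => s1 w * y w).
Proof.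
move=> b1 iy h1 hy; have i1 := int_bm b1; have i1y := int_mul b1 iy.
rewrite -RintegralZl //; apply: le_Rintegral => //.
  by apply: (eq_integrable measurableT _ _ _ (integrableZl measurableT a i1)) => w _; rewrite /= EFinM.
by move=> w _; rewrite mulrC ler_wpM2l.
Qed.

Lemma keyB' s1 y b : bm s1 -> mu.-integrable [set: T] (EFin \o y) ->
  (forall w, 0 <= s1 w) -> (forall w, y w <= b) ->
  I (fun w => s1 w * y w) <= b * I s1.
Proof.
move=> b1 iy h1 hy; have i1 := int_bm b1; have i1y := int_mul b1 iy.
rewrite -RintegralZl //; apply: le_Rintegral => //.
  by apply: (eq_integrable measurableT _ _ _ (integrableZl measurableT b i1)) => w _; rewrite /= EFinM.
by move=> w _; rewrite [s1 w * _]mulrC ler_wpM2r.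
Qed.
End Aux.

Theorem corollaryC1 (R : realType) (dO dX : measure_display)
  (Omega : measurableType dO) (TX : measurableType dX)
  (P : probability Omega R) (X : Omega -> TX) (U V Y0s Y1s : Omega -> R)
  (k : TX -> R -> probability Omega R) (Q : bool -> TX -> R)
  (YS : set R) (x : TX) (u : R) :
  measurable_fun [set: Omega] X -> measurable_fun [set: Omega] U ->
  measurable_fun [set: Omega] V ->
  measurable_fun [set: Omega] Y0s -> measurable_fun [set: Omega] Y1s ->
  is_cond_law P X U k ->
  (* (A3) *)
  P.-integrable [set: Omega] (EFin \o Y0s) ->
  P.-integrable [set: Omega] (EFin \o Y1s) ->
  P.-integrable [set: Omega] (EFin \o (fun w => Y0s w ^+ 2)) ->
  P.-integrable [set: Omega] (EFin \o (fun w => Y1s w ^+ 2)) ->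
  (* the conditional expectations at (x,u) exist *)
  (k x u).-integrable [set: Omega] (EFin \o Y0s) ->
  (k x u).-integrable [set: Omega] (EFin \o Y1s) ->
  (* (A6) common support YS *)
  (forall w, YS (Y0s w) /\ YS (Y1s w)) ->
  (* (A8') *)
  (forall x', 0 < Q true x' < Q false x') ->
  (forall d x', 0 <= Q d x' <= 1) ->
  0 <= u <= 1 ->
  (* ratios well defined *)
  mS k Q V true x u != 0 ->
  Ex (k x u) (fun w => Sel Q V false x w * Sel Q V true x w) != 0 ->
  let r := mY k Q V Y0s Y1s true x u / mS k Q V true x u in
  let m0Y := mY k Q V Y0s Y1s false x u in
  let m1S := mS k Q V true x u in
  let dS := DeltaS k Q V x u in
  let D := DeltaOO k Q V Y0s Y1s x u in
  let ylo := inf YS in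
  let yhi := sup YS in
  (* (i) (A7.1) *)
  (has_lbound YS -> ~ has_ubound YS -> is_interval YS ->
     r - (m0Y - ylo * (- dS)) / m1S <= D <= r - ylo) /\
  (* (ii) (A7.2) *)
  (~ has_lbound YS -> has_ubound YS -> is_interval YS ->
     r - yhi <= D <= r - (m0Y - yhi * (- dS)) / m1S) /\
  (* (iii) (A7.3) *)
  (has_lbound YS -> has_ubound YS ->
     (is_interval YS \/ (YS ylo /\ YS yhi)) ->
     r - Num.min ((m0Y - ylo * (- dS)) / m1S) yhi <= D <=
     r - Num.max ((m0Y - yhi * (- dS)) / m1S) ylo).
Proof.
move=> mX mU mV mY0 mY1 hcl _ _ _ _ iY0 iY1 hY hQ hQ01 hu hm1S hden.
move=> r m0Y m1S dS D ylo yhi.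
set kk := k x u.
pose s0 := Sel Q V false x; pose s1 := Sel Q V true x.
have b0 : bm s0 by split; [exact: sel_meas | exact: sel_bounded].
have b1 : bm s1 by split; [exact: sel_meas | exact: sel_bounded].
have h01 w : s1 w <= s0 w.
  rewrite /s0 /s1 /Sel; case: (boolP (V w <= Q true x)) => h /=.
    have /andP[_ hq] := hQ x.
    by rewrite (le_trans h (ltW hq)).
  by case: (V w <= Q false x).
have h1 w : 0 <= s1 w by rewrite /s1 /Sel; case: (V w <= Q true x).
have h11 w : s0 w * s1 w = s1 w.
  rewrite /s0 /s1 /Sel; case: (boolP (V w <= Q true x)) => h /=; last by rewrite mulr0.
  have /andP[_ hq] := hQ x.
  by rewrite (le_trans h (ltW hq)) mulr1.
have ExE f : Ex kk f = \int[kk]_w f w by [].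
set p1 := \int[kk]_w s1 w.
set p0 := \int[kk]_w s0 w.
set c := \int[kk]_w (s1 w * Y0s w).
set m := \int[kk]_w (s1 w * Y1s w).
set m0 := \int[kk]_w (s0 w * Y0s w).
have i1 := int_bm kk b1.
have i1y0 := int_mul kk b1 iY0.
have i1y1 := int_mul kk b1 iY1.
have eden : \int[kk]_w (Sel Q V false x w * Sel Q V true x w) = p1.
  by apply: eq_Rintegral => w _; exact: h11.
have enum : \int[kk]_w (Sel Q V false x w * Sel Q V true x w * (Y1s w - Y0s w)) = m - c.
  rewrite -RintegralB //; apply: eq_Rintegral => w _.
  by rewrite (h11 w) mulrBr.
have Dq : D = r - c / p1.
  rewrite /D /DeltaOO /r /mY /mS -/kk !ExE -/p1 -/m /= enum eden.
  by rewrite mulrBl.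
have hp1 : 0 < p1.
  rewrite lt0r hm1S /=; exact: Rintegral_ge0.
have em0 : m0Y = m0 by [].
have edS : - dS = p0 - p1 by rewrite /dS /DeltaS /mS !ExE opprB.
have em1 : m1S = p1 by [].
rewrite Dq em0 edS em1.
have kA a : (forall w, a <= Y0s w) -> c / p1 <= (m0 - a * (p0 - p1)) / p1.
  move=> ha; rewrite ler_pM2r ?invr_gt0 //.
  exact: (keyA kk _ _ _ _ b0 b1 iY0 h01 ha).
have kA' b : (forall w, Y0s w <= b) -> (m0 - b * (p0 - p1)) / p1 <= c / p1.
  move=> hb; rewrite ler_pM2r ?invr_gt0 //.
  exact: (keyA' kk _ _ _ _ b0 b1 iY0 h01 hb).
have kB a : (forall w, a <= Y0s w) -> a <= c / p1.
  move=> ha; rewrite ler_pdivlMr //.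
  exact: (keyB kk _ _ _ b1 iY0 h1 ha).
have kB' b : (forall w, Y0s w <= b) -> c / p1 <= b.
  move=> hb; rewrite ler_pdivrMr //.
  exact: (keyB' kk _ _ _ b1 iY0 h1 hb).
have lo : has_lbound YS -> forall w, ylo <= Y0s w.
  by move=> hl w; exact: (ge_inf hl (hY w).1).
have hi : has_ubound YS -> forall w, Y0s w <= yhi.
  by move=> hh w; exact: (ub_le_sup hh (hY w).1).
split; [|split].
- move=> hl _ _; rewrite !lerD2l !lerN2; apply/andP; split.
    exact: kA (lo hl).
  exact: kB (lo hl).
- move=> _ hh _; rewrite !lerD2l !lerN2; apply/andP; split.
    exact: kB' (hi hh).
  exact: kA' (hi hh).
- move=> hl hh _; rewrite !lerD2l !lerN2; apply/andP; split.
    by rewrite le_min (kA _ (lo hl)) (kB' _ (hi hh)).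
  by rewrite ge_max (kA' _ (hi hh)) (kB _ (lo hl)).
Qed.
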